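(* Every singular point $K'=(\mathbf{k}'_1,\dots,\mathbf{k}'_6)$ of the singularity variety $V=0$ corresponds to one of the following configurations: (1) the three legs are collinear, i.e. all six points $\mathbf{k}'_1,\dots,\mathbf{k}'_6$ lie on a common line; (2) two legs are collinear and one leg degenerates to a point, i.e. for some permutation $(i,j,l)$ of $(1,2,3)$ one has $\mathbf{k}'_l=\mathbf{k}'_{l+3}$ and $\mathbf{k}'_i,\mathbf{k}'_{i+3},\mathbf{k}'_j,\mathbf{k}'_{j+3}$ lie on a common line; (3) two legs degenerate to points, i.e. $\mathbf{k}'_i=\mathbf{k}'_{i+3}$ and $\mathbf{k}'_j=\mathbf{k}'_{j+3}$ for some distinct $i,j\in\{1,2,3\}$; (4) one leg degenerates to a point and the carrier lines of the remaining two legs pass through that point, i.e. for some permutation $(i,j,l)$ of $(1,2,3)$ one has $\mathbf{k}'_l=\mathbf{k}'_{l+3}=:\mathbf{q}$, the points $\mathbf{q},\mathbf{k}'_i,\mathbf{k}'_{i+3}$ lie on a common line and the points $\mathbf{q},\mathbf{k}'_j,\mathbf{k}'_{j+3}$ lie on a common line.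
   Context: A configuration is $K'=(\mathbf{k}'_1,\dots,\mathbf{k}'_6)$ with $\mathbf{k}'_i=(c_i,d_i)^T\in\mathbb{R}^2$, viewed as a point of $\mathbb{R}^{12}$; $\mathbf{k}'_1,\mathbf{k}'_2,\mathbf{k}'_3$ are base anchor points, $\mathbf{k}'_4,\mathbf{k}'_5,\mathbf{k}'_6$ platform anchor points, and the $i$-th leg ($i=1,2,3$) joins $\mathbf{k}'_i$ and $\mathbf{k}'_{i+3}$; its carrier line is the line through these two points. The singularity polynomial is $V(K')=\det\mathbf{V}(K')$, where $\mathbf{V}(K')$ is the $3\times3$ matrix whose $i$-th column ($i=1,2,3$) consists of the two coordinates of $\mathbf{k}'_{i+3}-\mathbf{k}'_i$ followed by $\det(\mathbf{k}'_i,\mathbf{k}'_{i+3}-\mathbf{k}'_i)$. A singular point of $V=0$ is a point of $\mathbb{R}^{12}$ where $V$ and all its partial derivatives with respect to $c_1,\dots,c_6,d_1,\dots,d_6$ vanish. *)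

(* Defs.v *)
From Stdlib Require Import Reals List.
From Coquelicot Require Import Coquelicot.
Import ListNotations.
Open Scope R_scope.

(* A configuration K' = (k'_1,...,k'_6), k'_n = (c n, d n), n = 1..6,
   is given by the two coordinate functions c, d : nat -> R
   (only the indices 1..6 are relevant). *)

Definition det2 (x1 y1 x2 y2 : R) : R := x1 * y2 - y1 * x2.

Definition det3 (a1 a2 a3 b1 b2 b3 e1 e2 e3 : R) : R :=
  a1 * (b2 * e3 - e2 * b3) - b1 * (a2 * e3 - e2 * a3) + e1 * (a2 * b3 - b2 * a3).

(* i-th column of V(K'), i = 1,2,3:
   k'_{i+3} - k'_i followed by det(k'_i, k'_{i+3} - k'_i) *)
Definition colx (c d : nat -> R) (i : nat) : R := c (i + 3)%nat - c i.
Definition coly (c d : nat -> R) (i : nat) : R := d (i + 3)%nat - d i.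
Definition colz (c d : nat -> R) (i : nat) : R :=
  det2 (c i) (d i) (c (i + 3)%nat - c i) (d (i + 3)%nat - d i).

Definition Vpoly (c d : nat -> R) : R :=
  det3 (colx c d 1) (coly c d 1) (colz c d 1)
       (colx c d 2) (coly c d 2) (colz c d 2)
       (colx c d 3) (coly c d 3) (colz c d 3).

Definition upd (f : nat -> R) (k : nat) (t : R) : nat -> R :=
  fun n => if Nat.eqb n k then t else f n.

Definition singular_point (c d : nat -> R) : Prop :=
  Vpoly c d = 0 /\
  forall k : nat, (1 <= k <= 6)%nat ->
    is_derive (fun t => Vpoly (upd c k t) d) (c k) 0 /\
    is_derive (fun t => Vpoly c (upd d k t)) (d k) 0.

Definition collinear (ps : list (R * R)) : Prop :=
  exists a b e : R, (a <> 0 \/ b <> 0) /\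
    List.Forall (fun p => a * fst p + b * snd p = e) ps.

Definition pt (c d : nat -> R) (n : nat) : R * R := (c n, d n).

Definition leg_degenerate (c d : nat -> R) (l : nat) : Prop :=
  pt c d l = pt c d (l + 3)%nat.

Definition perm123 (i j l : nat) : Prop :=
  (1 <= i <= 3)%nat /\ (1 <= j <= 3)%nat /\ (1 <= l <= 3)%nat /\
  i <> j /\ j <> l /\ i <> l.

(* Main.v *)
Require Import Defs.
From Stdlib Require Import Reals List Lra Lia Classical.
From Coquelicot Require Import Coquelicot.
Import ListNotations.
Open Scope R_scope.

Definition crs1 c d i j := coly c d i * colz c d j - coly c d j * colz c d i.
Definition crs2 c d i j := colz c d i * colx c d j - colz c d j * colx c d i.
Definition crs3 c d i j := colx c d i * coly c d j - colx c d j * coly c d i.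

Ltac dtac := unfold crs1, crs2, crs3, Vpoly, colx, coly, colz, det3, det2, upd; simpl;
  auto_derive; [try exact I | ring].

Lemma der_c1 c d : is_derive (fun t => Vpoly (upd c 1 t) d) (c 1%nat)
  (- crs1 c d 2 3 + crs3 c d 2 3 * d 4%nat).
Proof. dtac. Qed.
Lemma der_d1 c d : is_derive (fun t => Vpoly c (upd d 1 t)) (d 1%nat)
  (- crs2 c d 2 3 - crs3 c d 2 3 * c 4%nat).
Proof. dtac. Qed.
Lemma der_c4 c d : is_derive (fun t => Vpoly (upd c 4 t) d) (c 4%nat)
  (crs1 c d 2 3 - crs3 c d 2 3 * d 1%nat).
Proof. dtac. Qed.
Lemma der_d4 c d : is_derive (fun t => Vpoly c (upd d 4 t)) (d 4%nat)
  (crs2 c d 2 3 + crs3 c d 2 3 * c 1%nat).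
Proof. dtac. Qed.
Lemma der_c2 c d : is_derive (fun t => Vpoly (upd c 2 t) d) (c 2%nat)
  (- crs1 c d 3 1 + crs3 c d 3 1 * d 5%nat).
Proof. dtac. Qed.
Lemma der_d2 c d : is_derive (fun t => Vpoly c (upd d 2 t)) (d 2%nat)
  (- crs2 c d 3 1 - crs3 c d 3 1 * c 5%nat).
Proof. dtac. Qed.
Lemma der_c5 c d : is_derive (fun t => Vpoly (upd c 5 t) d) (c 5%nat)
  (crs1 c d 3 1 - crs3 c d 3 1 * d 2%nat).
Proof. dtac. Qed.
Lemma der_d5 c d : is_derive (fun t => Vpoly c (upd d 5 t)) (d 5%nat)
  (crs2 c d 3 1 + crs3 c d 3 1 * c 2%nat).
Proof. dtac. Qed.
Lemma der_c3 c d : is_derive (fun t => Vpoly (upd c 3 t) d) (c 3%nat)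
  (- crs1 c d 1 2 + crs3 c d 1 2 * d 6%nat).
Proof. dtac. Qed.
Lemma der_d3 c d : is_derive (fun t => Vpoly c (upd d 3 t)) (d 3%nat)
  (- crs2 c d 1 2 - crs3 c d 1 2 * c 6%nat).
Proof. dtac. Qed.
Lemma der_c6 c d : is_derive (fun t => Vpoly (upd c 6 t) d) (c 6%nat)
  (crs1 c d 1 2 - crs3 c d 1 2 * d 3%nat).
Proof. dtac. Qed.
Lemma der_d6 c d : is_derive (fun t => Vpoly c (upd d 6 t)) (d 6%nat)
  (crs2 c d 1 2 + crs3 c d 1 2 * c 3%nat).
Proof. dtac. Qed.

Lemma leg_cases P1 P2 P3 a1 a2 b1 b2 :
  -P1 + P3*b2 = 0 -> -P2 - P3*b1 = 0 -> P1 - P3*a2 = 0 -> P2 + P3*a1 = 0 ->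
  (P1 = 0 /\ P2 = 0 /\ P3 = 0) \/
  (P3 <> 0 /\ a1 = b1 /\ a2 = b2 /\ P1 = P3 * a2 /\ P2 = - P3 * a1).
Proof.
  intros H1 H2 H3 H4. destruct (Req_dec P3 0) as [E|E].
  - left. subst. lra.
  - right. assert (A: P3 * (a1 - b1) = 0) by lra.
    assert (B: P3 * (a2 - b2) = 0) by lra.
    apply Rmult_integral in A. apply Rmult_integral in B.
    destruct A; [contradiction|]. destruct B; [contradiction|]. repeat split; lra.
Qed.

Lemma col3 p1 p2 a1 a2 b1 b2 :
  (a1 - p1)*(b2 - a2) - (a2 - p2)*(b1 - a1) = 0 ->
  collinear [(p1,p2);(a1,a2);(b1,b2)].
Proof.
  intros H.
  destruct (Req_dec (b1 - a1) 0) as [E1|E1]; [destruct (Req_dec (b2 - a2) 0) as [E2|E2]|].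
  - destruct (Req_dec (a1 - p1) 0) as [F1|F1]; [destruct (Req_dec (a2 - p2) 0) as [F2|F2]|].
    + exists 1, 0, p1. split; [left; lra|]. repeat constructor; simpl; lra.
    + exists (a2 - p2), (-(a1-p1)), ((a2-p2)*p1 - (a1-p1)*p2).
      split; [left; lra|]. repeat constructor; simpl; nra.
    + exists (a2 - p2), (-(a1-p1)), ((a2-p2)*p1 - (a1-p1)*p2).
      split; [right; lra|]. repeat constructor; simpl; nra.
  - exists (b2 - a2), (-(b1-a1)), ((b2-a2)*a1 - (b1-a1)*a2).
    split; [left; lra|]. repeat constructor; simpl; nra.
  - exists (b2 - a2), (-(b1-a1)), ((b2-a2)*a1 - (b1-a1)*a2).
    split; [right; lra|]. repeat constructor; simpl; nra.
Qed.

Lemma on_line a1 a2 b1 b2 e1 e2 f1 f2 :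
 (b2-a2)*(e1*(f2-e2) - e2*(f1-e1)) - (a1*(b2-a2) - a2*(b1-a1))*(f2-e2) = 0 ->
 (a1*(b2-a2) - a2*(b1-a1))*(f1-e1) - (b1-a1)*(e1*(f2-e2) - e2*(f1-e1)) = 0 ->
 (b1-a1)*(f2-e2) - (b2-a2)*(f1-e1) = 0 ->
 (f1 - e1 <> 0 \/ f2 - e2 <> 0) ->
 (b2-a2)*e1 - (b1-a1)*e2 = a1*(b2-a2) - a2*(b1-a1) /\
 (b2-a2)*f1 - (b1-a1)*f2 = a1*(b2-a2) - a2*(b1-a1).
Proof.
  intros H1 H2 H3 Hn.
  set (w := (b2-a2)*e1 - (b1-a1)*e2 - (a1*(b2-a2) - a2*(b1-a1))).
  assert (Ex : (f1 - e1) * w = 0).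
  { transitivity (- e1 * ((b1-a1)*(f2-e2) - (b2-a2)*(f1-e1)) - ((a1*(b2-a2) - a2*(b1-a1))*(f1-e1) - (b1-a1)*(e1*(f2-e2) - e2*(f1-e1)))).
    - unfold w; ring.
    - rewrite H3, H2; ring. }
  assert (Ey : (f2 - e2) * w = 0).
  { transitivity (- e2 * ((b1-a1)*(f2-e2) - (b2-a2)*(f1-e1)) + ((b2-a2)*(e1*(f2-e2) - e2*(f1-e1)) - (a1*(b2-a2) - a2*(b1-a1))*(f2-e2))).
    - unfold w; ring.
    - rewrite H3, H1; ring. }
  assert (W : w = 0).
  { destruct Hn as [N|N].
    - apply Rmult_integral in Ex. destruct Ex; [contradiction | assumption].
    - apply Rmult_integral in Ey. destruct Ey; [contradiction | assumption]. }
  unfold w in W. split; nra.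
Qed.

Lemma coll_of_line (x y z : R) ps : (x <> 0 \/ y <> 0) ->
  List.Forall (fun p : R * R => y * fst p - x * snd p = z) ps -> collinear ps.
Proof.
  intros Hn HF. exists y, (-x), z. split.
  - destruct Hn; [right; lra | left; lra].
  - induction HF; constructor; [simpl; lra | assumption].
Qed.

Lemma case4_col c d i j m :
  crs1 c d i j = crs3 c d i j * d m -> crs2 c d i j = - crs3 c d i j * c m ->
  crs3 c d i j <> 0 ->
  collinear [pt c d m; pt c d i; pt c d (i+3)] /\
  collinear [pt c d m; pt c d j; pt c d (j+3)].
Proof.
  intros H1 H2 H3. unfold pt. split; apply col3.
  - assert (T: crs1 c d i j * colx c d i + crs2 c d i j * coly c d i
              + crs3 c d i j * colz c d i = 0)
      by (unfold crs1, crs2, crs3; ring).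
    rewrite H1, H2 in T.
    assert (G: crs3 c d i j * ((c i - c m) * (d (i + 3)%nat - d i) - (d i - d m) * (c (i + 3)%nat - c i)) = 0)
      by (rewrite <- T; unfold colx, coly, colz, det2; ring).
    apply Rmult_integral in G. destruct G; [contradiction | assumption].
  - assert (T: crs1 c d i j * colx c d j + crs2 c d i j * coly c d j
              + crs3 c d i j * colz c d j = 0)
      by (unfold crs1, crs2, crs3; ring).
    rewrite H1, H2 in T.
    assert (G: crs3 c d i j * ((c j - c m) * (d (j + 3)%nat - d j) - (d j - d m) * (c (j + 3)%nat - c j)) = 0)
      by (rewrite <- T; unfold colx, coly, colz, det2; ring).
    apply Rmult_integral in G. destruct G; [contradiction | assumption].
Qed.

Lemma nondeg c d j : ~ leg_degenerate c d j ->
  c (j+3)%nat - c j <> 0 \/ d (j+3)%nat - d j <> 0.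
Proof.
  intros N. destruct (Req_dec (c (j+3)%nat - c j) 0); [|left; auto].
  destruct (Req_dec (d (j+3)%nat - d j) 0); [|right; auto].
  exfalso; apply N. unfold leg_degenerate, pt. f_equal; lra.
Qed.

Lemma line_pair c d i j :
  crs1 c d i j = 0 -> crs2 c d i j = 0 -> crs3 c d i j = 0 -> ~ leg_degenerate c d j ->
  (d (i+3)%nat - d i) * c j - (c (i+3)%nat - c i) * d j
    = c i * (d (i+3)%nat - d i) - d i * (c (i+3)%nat - c i) /\
  (d (i+3)%nat - d i) * c (j+3)%nat - (c (i+3)%nat - c i) * d (j+3)%nat
    = c i * (d (i+3)%nat - d i) - d i * (c (i+3)%nat - c i).
Proof.
  intros H1 H2 H3 N. apply nondeg in N.
  unfold crs1, crs2, crs3, colx, coly, colz, det2 in *.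
  apply on_line; [lra | lra | lra | exact N].
Qed.

Lemma crs_sym c d i j : crs1 c d i j = 0 -> crs2 c d i j = 0 -> crs3 c d i j = 0 ->
  crs1 c d j i = 0 /\ crs2 c d j i = 0 /\ crs3 c d j i = 0.
Proof. unfold crs1, crs2, crs3. intros; repeat split; lra. Qed.

Lemma mk_deg c d l : c l = c (l+3)%nat -> d l = d (l+3)%nat -> leg_degenerate c d l.
Proof. intros; unfold leg_degenerate, pt; f_equal; auto. Qed.

Theorem theorem4 (c d : nat -> R) :
  singular_point c d ->
  (* (1) all three legs collinear *)
  collinear [pt c d 1; pt c d 2; pt c d 3; pt c d 4; pt c d 5; pt c d 6]
  (* (2) two legs collinear, one leg degenerate *)
  \/ (exists i j l : nat, perm123 i j l /\ leg_degenerate c d l /\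
        collinear [pt c d i; pt c d (i + 3); pt c d j; pt c d (j + 3)])
  (* (3) two legs degenerate *)
  \/ (exists i j : nat, (1 <= i <= 3)%nat /\ (1 <= j <= 3)%nat /\ i <> j /\
        leg_degenerate c d i /\ leg_degenerate c d j)
  (* (4) one leg degenerates to q, carrier lines of the other two pass through q *)
  \/ (exists i j l : nat, perm123 i j l /\ leg_degenerate c d l /\
        collinear [pt c d l; pt c d i; pt c d (i + 3)] /\
        collinear [pt c d l; pt c d j; pt c d (j + 3)]).
Proof.
  intros [HV Hd].
  destruct (Hd 1%nat ltac:(lia)) as [Hc1 Hd1].
  destruct (Hd 2%nat ltac:(lia)) as [Hc2 Hd2].
  destruct (Hd 3%nat ltac:(lia)) as [Hc3 Hd3].
  destruct (Hd 4%nat ltac:(lia)) as [Hc4 Hd4].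
  destruct (Hd 5%nat ltac:(lia)) as [Hc5 Hd5].
  destruct (Hd 6%nat ltac:(lia)) as [Hc6 Hd6].
  apply is_derive_unique in Hc1, Hd1, Hc2, Hd2, Hc3, Hd3, Hc4, Hd4, Hc5, Hd5, Hc6, Hd6.
  rewrite (is_derive_unique _ _ _ (der_c1 c d)) in Hc1.
  rewrite (is_derive_unique _ _ _ (der_d1 c d)) in Hd1.
  rewrite (is_derive_unique _ _ _ (der_c2 c d)) in Hc2.
  rewrite (is_derive_unique _ _ _ (der_d2 c d)) in Hd2.
  rewrite (is_derive_unique _ _ _ (der_c3 c d)) in Hc3.
  rewrite (is_derive_unique _ _ _ (der_d3 c d)) in Hd3.
  rewrite (is_derive_unique _ _ _ (der_c4 c d)) in Hc4.
  rewrite (is_derive_unique _ _ _ (der_d4 c d)) in Hd4.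
  rewrite (is_derive_unique _ _ _ (der_c5 c d)) in Hc5.
  rewrite (is_derive_unique _ _ _ (der_d5 c d)) in Hd5.
  rewrite (is_derive_unique _ _ _ (der_c6 c d)) in Hc6.
  rewrite (is_derive_unique _ _ _ (der_d6 c d)) in Hd6.
  destruct (leg_cases _ _ _ _ _ _ _ Hc1 Hd1 Hc4 Hd4)
    as [[Z11 [Z12 Z13]] | [N1 [A1 [A2 [P1e P2e]]]]].
  2:{ right; right; right. exists 2%nat, 3%nat, 1%nat.
      split; [unfold perm123; lia|]. split; [apply mk_deg; assumption|].
      apply case4_col; [lra | lra | exact N1]. }
  destruct (leg_cases _ _ _ _ _ _ _ Hc2 Hd2 Hc5 Hd5)
    as [[Z21 [Z22 Z23]] | [N1 [A1 [A2 [P1e P2e]]]]].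
  2:{ right; right; right. exists 3%nat, 1%nat, 2%nat.
      split; [unfold perm123; lia|]. split; [apply mk_deg; assumption|].
      apply case4_col; [lra | lra | exact N1]. }
  destruct (leg_cases _ _ _ _ _ _ _ Hc3 Hd3 Hc6 Hd6)
    as [[Z31 [Z32 Z33]] | [N1 [A1 [A2 [P1e P2e]]]]].
  2:{ right; right; right. exists 1%nat, 2%nat, 3%nat.
      split; [unfold perm123; lia|]. split; [apply mk_deg; assumption|].
      apply case4_col; [lra | lra | exact N1]. }
  destruct (crs_sym _ _ _ _ Z21 Z22 Z23) as [Y1 [Y2 Y3]].
  destruct (classic (leg_degenerate c d 1)) as [D1|D1];
  destruct (classic (leg_degenerate c d 2)) as [D2|D2];
  destruct (classic (leg_degenerate c d 3)) as [D3|D3].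
  - right; right; left. exists 1%nat, 2%nat. repeat split; auto; lia.
  - right; right; left. exists 1%nat, 2%nat. repeat split; auto; lia.
  - right; right; left. exists 1%nat, 3%nat. repeat split; auto; lia.
  -
    right; left. exists 2%nat, 3%nat, 1%nat.
    split; [unfold perm123; lia|]. split; [exact D1|].
    destruct (line_pair c d 2 3 Z11 Z12 Z13 D3) as [L1 L2].
    pose proof (nondeg c d 2 D2) as N.
    apply (coll_of_line (c 5%nat - c 2%nat) (d 5%nat - d 2%nat)
             (c 2%nat * (d 5%nat - d 2%nat) - d 2%nat * (c 5%nat - c 2%nat))); [exact N|].
    simpl in *. repeat constructor; simpl; first [ring | lra].
  - right; right; left. exists 2%nat, 3%nat. repeat split; auto; lia.
  -
    right; left. exists 1%nat, 3%nat, 2%nat.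
    split; [unfold perm123; lia|]. split; [exact D2|].
    destruct (line_pair c d 1 3 Y1 Y2 Y3 D3) as [L1 L2].
    pose proof (nondeg c d 1 D1) as N.
    apply (coll_of_line (c 4%nat - c 1%nat) (d 4%nat - d 1%nat)
             (c 1%nat * (d 4%nat - d 1%nat) - d 1%nat * (c 4%nat - c 1%nat))); [exact N|].
    simpl in *. repeat constructor; simpl; first [ring | lra].
  -
    right; left. exists 1%nat, 2%nat, 3%nat.
    split; [unfold perm123; lia|]. split; [exact D3|].
    destruct (line_pair c d 1 2 Z31 Z32 Z33 D2) as [L1 L2].
    pose proof (nondeg c d 1 D1) as N.
    apply (coll_of_line (c 4%nat - c 1%nat) (d 4%nat - d 1%nat)
             (c 1%nat * (d 4%nat - d 1%nat) - d 1%nat * (c 4%nat - c 1%nat))); [exact N|].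
    simpl in *. repeat constructor; simpl; first [ring | lra].
  - left.
    destruct (line_pair c d 1 2 Z31 Z32 Z33 D2) as [L1 L2].
    destruct (line_pair c d 1 3 Y1 Y2 Y3 D3) as [L3 L4].
    pose proof (nondeg c d 1 D1) as N.
    apply (coll_of_line (c 4%nat - c 1%nat) (d 4%nat - d 1%nat)
             (c 1%nat * (d 4%nat - d 1%nat) - d 1%nat * (c 4%nat - c 1%nat))); [exact N|].
    simpl in *. repeat constructor; simpl; first [ring | lra].
Qed.
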